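(* Let $X\subseteq V_\Delta$ be finite such that $G_X$ is connected and $X$ has no holes. Then for all $u,v\in X$, $$2\cdot \mathrm{dist}(u,v)=\mathrm{dist}_x(u,v)+\mathrm{dist}_y(u,v)+\mathrm{dist}_z(u,v).$$
   Context: $G_\Delta=(V_\Delta,E_\Delta)$ is the infinite regular triangular grid graph; its edges are parallel to one of three axes $x,y,z$. For finite $X\subseteq V_\Delta$, $G_X$ is the subgraph of $G_\Delta$ induced by $X$; $X$ has no holes if the subgraph of $G_\Delta$ induced by $V_\Delta\setminus X$ is connected. For an axis $d\in\{x,y,z\}$, let $E_d$ be the set of edges of $G_X$ parallel to $d$; the $d$-portals are the vertex sets of the connected components of $(X,E_d)$, and $\mathrm{portal}_d(u)$ is the $d$-portal containing $u$. Two $d$-portals are adjacent if some edge of $G_X$ joins a node of one to a node of the other. The $d$-portal graph $\mathcal P_d$ has the $d$-portals as vertices, adjacent portals being joined by an edge. $\mathrm{dist}(u,v)$ is the distance between $u$ and $v$ in $G_X$, and $\mathrm{dist}_d(u,v)$ is the distance between $\mathrm{portal}_d(u)$ and $\mathrm{portal}_d(v)$ in $\mathcal P_d$. *)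

(* Defs.v *)
(* The triangular grid G_Delta in axial coordinates on Z*Z. *)
From Stdlib Require Import ZArith List.
Open Scope Z_scope.

Definition vertex := (Z * Z)%type.

Inductive axis := AxX | AxY | AxZ.

Definition axis_vec (d : axis) : vertex :=
  match d with AxX => (1, 0) | AxY => (0, 1) | AxZ => (1, -1) end.

Definition tri_edge (d : axis) (p q : vertex) : Prop :=
  let '(a, b) := axis_vec d in
  (fst q = fst p + a /\ snd q = snd p + b) \/
  (fst q = fst p - a /\ snd q = snd p - b).

Definition tri_adj (p q : vertex) : Prop := exists d, tri_edge d p q.

Inductive walk {A : Type} (R : A -> A -> Prop) : A -> A -> nat -> Prop :=
| walk0 : forall a, walk R a a 0
| walkS : forall a b c n, R a b -> walk R b c n -> walk R a c (S n).

Definition is_dist {A : Type} (R : A -> A -> Prop) (a b : A) (n : nat) : Prop :=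
  walk R a b n /\ forall m, walk R a b m -> (n <= m)%nat.

(* A finite vertex set X is given by a list (membership = In). *)
Definition adjX (X : list vertex) (p q : vertex) : Prop :=
  In p X /\ In q X /\ tri_adj p q.

Definition adjX_d (X : list vertex) (d : axis) (p q : vertex) : Prop :=
  In p X /\ In q X /\ tri_edge d p q.

Definition GX_connected (X : list vertex) : Prop :=
  forall u v, In u X -> In v X -> exists n, walk (adjX X) u v n.

Definition no_holes (X : list vertex) : Prop :=
  forall u v, ~ In u X -> ~ In v X ->
    exists n, walk (fun p q => ~ In p X /\ ~ In q X /\ tri_adj p q) u v n.

Definition same_portal (X : list vertex) (d : axis) (p q : vertex) : Prop :=
  In p X /\ In q X /\ exists n, walk (adjX_d X d) p q n.

Definition portal_adj (X : list vertex) (d : axis) (p q : vertex) : Prop :=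
  In p X /\ In q X /\ ~ same_portal X d p q /\
  exists p' q', same_portal X d p p' /\ same_portal X d q q' /\ adjX X p' q'.

(* Walks in P_d are represented through representative vertices; walks
   starting anywhere in portal_d(u) and ending anywhere in portal_d(v). *)
Definition portal_walk (X : list vertex) (d : axis) (u v : vertex) (n : nat) : Prop :=
  exists u' v', same_portal X d u u' /\ same_portal X d v v' /\
                walk (portal_adj X d) u' v' n.

Definition is_portal_dist (X : list vertex) (d : axis) (u v : vertex) (n : nat) : Prop :=
  portal_walk X d u v n /\ forall m, portal_walk X d u v m -> (n <= m)%nat.

(* Main.v *)
Require Import Defs.
From Stdlib Require Import ZArith List Lia Classical ClassicalEpsilon Bool.
Import ListNotations.
Open Scope Z_scope.

Definition line (d : axis) (p : vertex) : Z :=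
  match d with AxX => snd p | AxY => fst p | AxZ => fst p + snd p end.
Definition pos (d : axis) (p : vertex) : Z :=
  match d with AxX => - fst p | AxY => - snd p | AxZ => snd p end.
Definition vtx (d : axis) (l k : Z) : vertex :=
  match d with AxX => (-k, l) | AxY => (l, -k) | AxZ => (l - k, k) end.

Lemma line_vtx d l k : line d (vtx d l k) = l.
Proof. destruct d; simpl; lia. Qed.
Lemma pos_vtx d l k : pos d (vtx d l k) = k.
Proof. destruct d; simpl; lia. Qed.
Lemma vtx_eta d p : vtx d (line d p) (pos d p) = p.
Proof. destruct d, p; simpl; f_equal; lia. Qed.
Lemma lp_inj d p q : line d p = line d q -> pos d p = pos d q -> p = q.
Proof. intros H1 H2. rewrite <- (vtx_eta d p), <- (vtx_eta d q), H1, H2. reflexivity. Qed.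

Definition NB (dl dp : Z) : Prop :=
  (dl = 1 /\ dp = 0) \/ (dl = -1 /\ dp = 0) \/ (dl = 0 /\ dp = 1) \/
  (dl = 0 /\ dp = -1) \/ (dl = 1 /\ dp = 1) \/ (dl = -1 /\ dp = -1).

Lemma adj_NB d p q : tri_adj p q -> NB (line d q - line d p) (pos d q - pos d p).
Proof.
  destruct p as [a b], q as [a' b']; intros [e He]; destruct e, d;
  unfold tri_edge in He; simpl in *; unfold NB; lia.
Qed.

Lemma edge_same d p q : tri_edge d p q -> line d q = line d p /\ (pos d q - pos d p = 1 \/ pos d q - pos d p = -1).
Proof. destruct p as [a b], q as [a' b']; destruct d; unfold tri_edge; simpl; lia. Qed.

Lemma edge_of_lp d p q : line d q = line d p -> (pos d q - pos d p = 1 \/ pos d q - pos d p = -1) -> tri_edge d p q.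
Proof. destruct p as [a b], q as [a' b']; destruct d; unfold tri_edge; simpl; lia. Qed.

Lemma edge_other e d p q : tri_edge e p q -> e <> d -> (line d q - line d p = 1 \/ line d q - line d p = -1).
Proof. destruct p as [a b], q as [a' b']; destruct e, d; unfold tri_edge; simpl; intros; try congruence; lia. Qed.

Lemma adj_sameline d p q : tri_adj p q -> line d p = line d q -> tri_edge d p q.
Proof.
  intros Ha Hl. pose proof (adj_NB d p q Ha) as N. apply edge_of_lp; unfold NB in N; lia.
Qed.

Lemma tri_edge_sym d p q : tri_edge d p q -> tri_edge d q p.
Proof. destruct p as [a b], q as [a' b']; destruct d; unfold tri_edge; simpl; lia. Qed.
Lemma tri_adj_sym p q : tri_adj p q -> tri_adj q p.
Proof. intros [e He]; exists e; apply tri_edge_sym; auto. Qed.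

Lemma last_dflt {A} (a : A) l d d' : last (a :: l) d = last (a :: l) d'.
Proof. revert a; induction l as [|b l IH]; intros a; [reflexivity|].
  change (last (b :: l) d = last (b :: l) d'). apply IH. Qed.
Lemma last_cons2 {A} (a b : A) l d : last (a :: b :: l) d = last (b :: l) b.
Proof. change (last (b :: l) d = last (b :: l) b). apply last_dflt. Qed.


Fixpoint chain {A} (R : A -> A -> Prop) (l : list A) : Prop :=
  match l with
  | [] => True
  | x :: l' => match l' with [] => True | y :: _ => R x y /\ chain R l' end
  end.

Lemma chain_join {A} (R : A -> A -> Prop) x l1 y l2 :
  chain R (x :: l1) -> last (x :: l1) x = y -> chain R (y :: l2) -> chain R (x :: l1 ++ l2).
Proof.
  revert x; induction l1 as [|z l1 IH]; intros x H1 H2 H3.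
  - simpl in H2; subst; exact H3.
  - simpl in H1; destruct H1 as [Hxz Hc]. simpl. split; auto.
    apply (IH z Hc); auto. simpl in H2 |- *. destruct l1; auto.
    rewrite (last_dflt _ _ z x); auto.
Qed.

Lemma chain_split {A} (R : A -> A -> Prop) x l1 y l2 :
  chain R (x :: l1 ++ y :: l2) -> chain R (x :: l1 ++ [y]) /\ chain R (y :: l2).
Proof.
  revert x; induction l1 as [|z l1 IH]; intros x H.
  - simpl in H |- *. destruct H as [H1 H2]. split; auto.
  - simpl in H. destruct H as [H1 H2]. destruct (IH z H2) as [A1 A2].
    split; auto. simpl. split; auto.
Qed.

Lemma chain_mono {A} (R R' : A -> A -> Prop) l :
  (forall x y, R x y -> R' x y) -> chain R l -> chain R' l.
Proof.
  intros HR; induction l as [|x l IH]; simpl; auto.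
  destruct l; auto. intros [H1 H2]; split; auto.
Qed.

Lemma chain_forall {A} (R : A -> A -> Prop) (P : A -> Prop) l :
  (forall x y, R x y -> P x /\ P y) -> chain R l -> (2 <= length l)%nat -> Forall P l.
Proof.
  intros HR; induction l as [|x l IH]; simpl; intros Hc Hlen; [lia|].
  destruct l as [|y l]; simpl in Hlen; [lia|].
  destruct Hc as [H1 H2]. constructor. apply (HR _ _ H1).
  destruct l as [|z l].
  - constructor; [apply (HR _ _ H1)|constructor].
  - apply IH; auto. simpl; lia.
Qed.

Lemma chain_restrict {A} (R : A -> A -> Prop) (P : A -> Prop) l :
  chain R l -> Forall P l -> chain (fun x y => R x y /\ P x /\ P y) l.
Proof.
  induction l as [|x l IH]; simpl; auto. destruct l as [|y l]; auto.
  intros [H1 H2] HF. inversion HF; subst. inversion H4; subst.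
  split; auto.
Qed.

Lemma walk_chain {A} (R : A -> A -> Prop) x y n :
  walk R x y n -> exists l, chain R (x :: l) /\ last (x :: l) x = y /\ length l = n.
Proof.
  induction 1 as [a|a b c n Hab Hw IH].
  - exists []; simpl; auto.
  - destruct IH as [l [H1 [H2 H3]]]. exists (b :: l). rewrite last_cons2. simpl. repeat split; auto.
Qed.

Lemma chain_walk {A} (R : A -> A -> Prop) x l :
  chain R (x :: l) -> walk R x (last (x :: l) x) (length l).
Proof.
  revert x; induction l as [|y l IH]; intros x H.
  - simpl. constructor.
  - simpl in H. destruct H as [H1 H2]. rewrite last_cons2. simpl. econstructor; eauto.
Qed.

Lemma walk_app {A} (R : A -> A -> Prop) x y z n m :
  walk R x y n -> walk R y z m -> walk R x z (n + m).
Proof. induction 1; intros; simpl; auto. econstructor; eauto. Qed.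

Lemma walk_snoc {A} (R : A -> A -> Prop) x y z n :
  walk R x y n -> R y z -> walk R x z (S n).
Proof.
  intros H1 H2. replace (S n) with (n + 1)%nat by lia. eapply walk_app; eauto.
  econstructor; eauto. constructor.
Qed.

Lemma walk_sym {A} (R : A -> A -> Prop) x y n :
  (forall a b, R a b -> R b a) -> walk R x y n -> walk R y x n.
Proof.
  intros HS; induction 1. constructor. eapply walk_snoc; eauto.
Qed.

Lemma walk_mono {A} (R R' : A -> A -> Prop) x y n :
  (forall a b, R a b -> R' a b) -> walk R x y n -> walk R' x y n.
Proof. intros HR; induction 1; econstructor; eauto. Qed.

Lemma last_app {A} (l l' : list A) d : last (l ++ l') d = last l' (last l d).
Proof.
  revert d; induction l as [|x l IH]; intros d; [reflexivity|].
  destruct l as [|y l].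
  - simpl. destruct l'; [reflexivity|]. apply last_dflt.
  - change ((x :: y :: l) ++ l') with (x :: y :: (l ++ l')). rewrite !last_cons2.
    rewrite <- IH. reflexivity.
Qed.

Fixpoint cntc {A} (f : A -> A -> nat) (l : list A) : nat :=
  match l with
  | [] => 0
  | x :: l' => match l' with [] => 0 | y :: _ => f x y + cntc f l' end
  end%nat.

Lemma cntc_join {A} (f : A -> A -> nat) x l1 y l2 :
  last (x :: l1) x = y -> cntc f (x :: l1 ++ l2) = (cntc f (x :: l1) + cntc f (y :: l2))%nat.
Proof.
  revert x; induction l1 as [|z l1 IH]; intros x H.
  - simpl in H; subst; simpl. reflexivity.
  - assert (E : cntc f (x :: (z :: l1) ++ l2) = (f x z + cntc f (z :: l1 ++ l2))%nat) by reflexivity.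
    assert (E2 : cntc f (x :: z :: l1) = (f x z + cntc f (z :: l1))%nat) by reflexivity.
    rewrite E, E2. rewrite (IH z). lia. rewrite last_cons2 in H. auto.
Qed.

Lemma cntc_ext {A} (R : A -> A -> Prop) (f g : A -> A -> nat) l :
  chain R l -> (forall x y, R x y -> f x y = g x y) -> cntc f l = cntc g l.
Proof.
  intros Hc Hfg; induction l as [|x l IH]; simpl; auto.
  destruct l as [|y l]; auto. destruct Hc as [H1 H2]. rewrite Hfg by auto. rewrite IH; auto.
Qed.

Lemma cntc_plus {A} (f g : A -> A -> nat) l :
  cntc (fun x y => f x y + g x y)%nat l = (cntc f l + cntc g l)%nat.
Proof.
  induction l as [|x l IH]; simpl; auto. destruct l as [|y l]; auto. rewrite IH. lia.
Qed.

Lemma cntc_zero {A} (f : A -> A -> nat) l :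
  (forall x y, In x l -> In y l -> f x y = 0%nat) -> cntc f l = 0%nat.
Proof.
  induction l as [|x l IH]; simpl; intros H; auto. destruct l as [|y l]; auto.
  rewrite H by (simpl; auto). rewrite IH; auto. all: try (intros a b Ha Hb; apply H; simpl in *; tauto).
Qed.

Definition bnd {A} (H : A -> bool) (x y : A) : nat := if Bool.eqb (H x) (H y) then 0%nat else 1%nat.

Lemma bnd_even {A} (H : A -> bool) x l :
  Nat.even (cntc (bnd H) (x :: l)) = Bool.eqb (H x) (H (last (x :: l) x)).
Proof.
  revert x; induction l as [|y l IH]; intros x.
  - simpl. destruct (H x); reflexivity.
  - change (cntc (bnd H) (x :: y :: l)) with (bnd H x y + cntc (bnd H) (y :: l))%nat.
    rewrite Nat.even_add, IH. unfold bnd.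
    rewrite last_cons2.
    destruct (H x), (H y), (H (last (y :: l) y)); reflexivity.
Qed.

Definition crossZ (gL gP lx px ly py : Z) : nat :=
  if Z.eq_dec px gP then
    (if Z.eq_dec py (gP + 1) then (if Z_lt_dec gL lx then 1 else 0) else 0)%nat
  else if Z.eq_dec py gP then
    (if Z.eq_dec px (gP + 1) then (if Z_lt_dec gL ly then 1 else 0) else 0)%nat
  else 0%nat.

Ltac crush :=
  repeat (match goal with
   | |- context [Z.eq_dec ?a ?b] => destruct (Z.eq_dec a b)
   | |- context [Z_lt_dec ?a ?b] => destruct (Z_lt_dec a b)
   | |- context [Z_le_dec ?a ?b] => destruct (Z_le_dec a b)
   | |- context [Z.eqb ?a ?b] => destruct (Z.eqb_spec a b)
   | |- context [Z.ltb ?a ?b] => destruct (Z.ltb_spec a b)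
   end; simpl; try (exfalso; lia)); try lia; try reflexivity.

Lemma pw10 gL gP lx px ly py :
  NB (ly - lx) (py - px) -> ~ (lx = gL + 1 /\ px = gP) -> ~ (ly = gL + 1 /\ py = gP) ->
  crossZ gL gP lx px ly py = crossZ (gL + 1) gP lx px ly py.
Proof. unfold NB, crossZ; intros N H1 H2. crush. Qed.

Definition hbZ (c gP : Z) (p l : Z) : bool := (p =? gP + 1) && (c <? l).

Lemma pw01 gL gP lx px ly py :
  NB (ly - lx) (py - px) ->
  ~ (lx = gL /\ px = gP) -> ~ (ly = gL /\ py = gP) ->
  ~ (lx = gL /\ px = gP + 1) -> ~ (ly = gL /\ py = gP + 1) ->
  (crossZ gL gP lx px ly py + crossZ gL (gP + 1) lx px ly py)%nat =
  (if Bool.eqb (hbZ gL gP px lx) (hbZ gL gP py ly) then 0 else 1)%nat.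
Proof. unfold NB, crossZ, hbZ; intros N H1 H2 H3 H4. crush. Qed.

Lemma pw11 gL gP lx px ly py :
  NB (ly - lx) (py - px) ->
  ~ (lx = gL /\ px = gP) -> ~ (ly = gL /\ py = gP) ->
  ~ (lx = gL + 1 /\ px = gP + 1) -> ~ (ly = gL + 1 /\ py = gP + 1) ->
  (crossZ gL gP lx px ly py + crossZ (gL + 1) (gP + 1) lx px ly py)%nat =
  (if Bool.eqb (hbZ (gL + 1) gP px lx) (hbZ (gL + 1) gP py ly) then 0 else 1)%nat.
Proof. unfold NB, crossZ, hbZ; intros N H1 H2 H3 H4. crush. Qed.

Definition cross d g x y := crossZ (line d g) (pos d g) (line d x) (pos d x) (line d y) (pos d y).
Definition QX (X : list vertex) x y := tri_adj x y /\ In x X /\ In y X.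

Lemma even_sum a b : Nat.even (a + b) = true -> Nat.even a = Nat.even b.
Proof. rewrite Nat.even_add. destruct (Nat.even a), (Nat.even b); simpl; congruence. Qed.

Lemma notin_neq X d x g : In x X -> ~ In g X -> ~ (line d x = line d g /\ pos d x = pos d g).
Proof. intros Hx Hg [H1 H2]. apply Hg. rewrite <- (lp_inj d x g H1 H2). auto. Qed.

Lemma closed_bnd (H : vertex -> bool) x0 l :
  last (x0 :: l) x0 = x0 -> Nat.even (cntc (bnd H) (x0 :: l)) = true.
Proof. intros E. rewrite bnd_even, E. destruct (H x0); reflexivity. Qed.

Lemma par_core X d x0 l g g' :
  chain (QX X) (x0 :: l) -> last (x0 :: l) x0 = x0 -> ~ In g X -> ~ In g' X ->
  ((line d g' = line d g + 1 /\ pos d g' = pos d g) \/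
   (line d g' = line d g /\ pos d g' = pos d g + 1) \/
   (line d g' = line d g + 1 /\ pos d g' = pos d g + 1)) ->
  Nat.even (cntc (cross d g) (x0 :: l)) = Nat.even (cntc (cross d g') (x0 :: l)).
Proof.
  intros Hc Hcl Hg Hg' [[E1 E2]|[[E1 E2]|[E1 E2]]].
  - f_equal. apply (cntc_ext (QX X)); auto. intros x y [Ha [Hx Hy]].
    unfold cross. rewrite E1, E2. apply pw10.
    + apply adj_NB; auto.
    + rewrite <- E1, <- E2. apply (notin_neq X); auto.
    + rewrite <- E1, <- E2. apply (notin_neq X); auto.
  - apply even_sum. rewrite <- cntc_plus.
    rewrite (cntc_ext (QX X) _ (bnd (fun y => hbZ (line d g) (pos d g) (pos d y) (line d y)))); auto.
    apply closed_bnd; auto.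
    intros x y [Ha [Hx Hy]]. unfold cross, bnd. rewrite E1, E2. apply pw01.
    + apply adj_NB; auto.
    + apply (notin_neq X); auto.
    + apply (notin_neq X); auto.
    + rewrite <- E1, <- E2. apply (notin_neq X); auto.
    + rewrite <- E1, <- E2. apply (notin_neq X); auto.
  - apply even_sum. rewrite <- cntc_plus.
    rewrite (cntc_ext (QX X) _ (bnd (fun y => hbZ (line d g + 1) (pos d g) (pos d y) (line d y)))); auto.
    apply closed_bnd; auto.
    intros x y [Ha [Hx Hy]]. unfold cross, bnd. rewrite E1, E2. apply pw11.
    + apply adj_NB; auto.
    + apply (notin_neq X); auto.
    + apply (notin_neq X); auto.
    + rewrite <- E1, <- E2. apply (notin_neq X); auto.
    + rewrite <- E1, <- E2. apply (notin_neq X); auto.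
Qed.

Lemma par_step X d x0 l g g' :
  chain (QX X) (x0 :: l) -> last (x0 :: l) x0 = x0 -> ~ In g X -> ~ In g' X -> tri_adj g g' ->
  Nat.even (cntc (cross d g) (x0 :: l)) = Nat.even (cntc (cross d g') (x0 :: l)).
Proof.
  intros Hc Hcl Hg Hg' Ha. pose proof (adj_NB d g g' Ha) as N. unfold NB in N.
  destruct N as [N|[N|[N|[N|[N|N]]]]].
  - apply par_core with X; auto. left; lia.
  - symmetry. apply par_core with X; auto. left; lia.
  - apply par_core with X; auto. right; left; lia.
  - symmetry. apply par_core with X; auto. right; left; lia.
  - apply par_core with X; auto. right; right; lia.
  - symmetry. apply par_core with X; auto. right; right; lia.
Qed.

Fixpoint bound d (X : list vertex) : Z :=
  match X with [] => 0 | y :: X' => Z.abs (pos d y) + bound d X' end.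

Lemma bound_spec d X y : In y X -> Z.abs (pos d y) <= bound d X.
Proof.
  induction X as [|z X IH]; simpl; [tauto|]. intros [E|H].
  - subst. pose proof (Z.abs_nonneg (pos d y)). assert (0 <= bound d X) by (clear; induction X; simpl; lia). lia.
  - specialize (IH H). pose proof (Z.abs_nonneg (pos d z)). lia.
Qed.

Theorem parity X d x0 l g :
  no_holes X -> chain (QX X) (x0 :: l) -> last (x0 :: l) x0 = x0 -> ~ In g X ->
  Nat.even (cntc (cross d g) (x0 :: l)) = true.
Proof.
  intros NH Hc Hcl Hg.
  set (N := bound d X + 1).
  set (g0 := vtx d 0 N).
  assert (Hg0 : ~ In g0 X).
  { intro H. pose proof (bound_spec d X g0 H). unfold g0 in H0. rewrite pos_vtx in H0. unfold N in H0. lia. }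
  assert (E0 : cntc (cross d g0) (x0 :: l) = 0%nat).
  { destruct l as [|y1 l]; [reflexivity|].
    assert (HF : Forall (fun y => In y X) (x0 :: y1 :: l)).
    { apply (chain_forall (QX X)); auto. intros a b [_ [Ha Hb]]; auto. simpl; lia. }
    apply cntc_zero. intros x y Hx Hy. rewrite Forall_forall in HF.
    pose proof (bound_spec d X x (HF x Hx)). pose proof (bound_spec d X y (HF y Hy)).
    unfold cross, crossZ, g0. rewrite pos_vtx. crush. }
  destruct (NH g g0 Hg Hg0) as [n W].
  assert (Nat.even (cntc (cross d g) (x0 :: l)) = Nat.even (cntc (cross d g0) (x0 :: l))).
  { clear E0. induction W as [a|a b c n [Ha [Hb Hab]] W IH].
    - reflexivity.
    - rewrite (par_step X d x0 l a b); auto. }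
  rewrite H, E0. reflexivity.
Qed.

Notation sp X d := (same_portal X d).

Lemma adjXd_sym X d p q : adjX_d X d p q -> adjX_d X d q p.
Proof. intros [H1 [H2 H3]]. repeat split; auto. apply tri_edge_sym; auto. Qed.
Lemma adjX_sym X p q : adjX X p q -> adjX X q p.
Proof. intros [H1 [H2 H3]]. repeat split; auto. apply tri_adj_sym; auto. Qed.

Lemma sp_refl X d p : In p X -> sp X d p p.
Proof. intros H. repeat split; auto. exists 0%nat. constructor. Qed.
Lemma sp_sym X d p q : sp X d p q -> sp X d q p.
Proof. intros [H1 [H2 [n W]]]. repeat split; auto. exists n. apply walk_sym; auto. apply adjXd_sym. Qed.
Lemma sp_trans X d p q r : sp X d p q -> sp X d q r -> sp X d p r.
Proof. intros [H1 [H2 [n W]]] [H3 [H4 [m W']]]. repeat split; auto. exists (n + m)%nat. eapply walk_app; eauto. Qed.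

Lemma walkd_line X d p q n : walk (adjX_d X d) p q n -> line d p = line d q.
Proof. induction 1; auto. destruct H as [_ [_ H]]. apply edge_same in H. lia. Qed.
Lemma sp_line X d p q : sp X d p q -> line d p = line d q.
Proof. intros [_ [_ [n W]]]. eapply walkd_line; eauto. Qed.

Lemma sp_of_adj X d p q : adjX X p q -> line d p = line d q -> sp X d p q.
Proof.
  intros [H1 [H2 H3]] Hl. repeat split; auto. exists 1%nat. econstructor; [|constructor].
  repeat split; auto. apply adj_sameline; auto.
Qed.

Lemma nsp_line X d p q : adjX X p q -> ~ sp X d p q -> line d q - line d p = 1 \/ line d q - line d p = -1.
Proof.
  intros Ha Hn. pose proof (adj_NB d p q (proj2 (proj2 Ha))) as N. unfold NB in N.
  destruct (Z.eq_dec (line d p) (line d q)) as [E|E].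
  - exfalso. apply Hn. apply sp_of_adj; auto.
  - lia.
Qed.

Lemma walk_pos X d p q n : walk (adjX X) p q n -> Z.abs (pos d q - pos d p) <= Z.of_nat n.
Proof.
  induction 1. rewrite Z.sub_diag; simpl; lia.
  destruct H as [_ [_ H]]. pose proof (adj_NB d a b H) as N. unfold NB in N. lia.
Qed.

Fixpoint segn d l p dir (k : nat) : list vertex :=
  match k with O => [] | S k' => vtx d l (p + dir) :: segn d l (p + dir) dir k' end.

Lemma segn_last d l p dir k : last (vtx d l p :: segn d l p dir k) (vtx d l p) = vtx d l (p + Z.of_nat k * dir).
Proof.
  revert p; induction k as [|k IH]; intros p. simpl. f_equal; lia.
  change (segn d l p dir (S k)) with (vtx d l (p+dir) :: segn d l (p+dir) dir k).
  specialize (IH (p + dir)). rewrite last_cons2. rewrite IH. f_equal. lia.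
Qed.

Lemma segn_in d l p dir k z : In z (segn d l p dir k) -> exists i, 1 <= i <= Z.of_nat k /\ z = vtx d l (p + i * dir).
Proof.
  revert p; induction k as [|k IH]; intros p; simpl; [tauto|]. intros [E|H].
  - exists 1. split; [lia|]. subst. f_equal; lia.
  - destruct (IH _ H) as [i [Hi E]]. exists (i + 1). split; [lia|]. subst. f_equal; lia.
Qed.

Lemma segn_len d l p dir k : length (segn d l p dir k) = k.
Proof. revert p; induction k; simpl; auto. Qed.

Lemma segn_chain (R : vertex -> vertex -> Prop) d l p dir k :
  (forall i, 0 <= i < Z.of_nat k -> R (vtx d l (p + i * dir)) (vtx d l (p + (i + 1) * dir))) ->
  chain R (vtx d l p :: segn d l p dir k).
Proof.
  revert p; induction k as [|k IH]; intros p H; simpl; auto.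
  split.
  - specialize (H 0 ltac:(lia)). replace (p + 0 * dir) with p in H by lia.
    replace (p + (0 + 1) * dir) with (p + dir) in H by lia. auto.
  - apply IH. intros i Hi. specialize (H (i + 1) ltac:(lia)).
    replace (p + dir + i * dir) with (p + (i + 1) * dir) by lia.
    replace (p + dir + (i + 1) * dir) with (p + (i + 1 + 1) * dir) by lia. auto.
Qed.

Definition seg d x y := segn d (line d x) (pos d x) (Z.sgn (pos d y - pos d x)) (Z.abs_nat (pos d y - pos d x)).

Definition btw (a b k : Z) := Z.min a b <= k <= Z.max a b.

Lemma seg_last d x y : line d x = line d y -> last (x :: seg d x y) x = y.
Proof.
  intros Hl. unfold seg. set (L := line d x) in *. set (P := pos d x) in *.
  assert (E : x = vtx d L P) by (unfold L, P; symmetry; apply vtx_eta).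
  rewrite E. rewrite segn_last.
  rewrite <- (vtx_eta d y). rewrite <- Hl. f_equal.
  rewrite pos_vtx.   rewrite Zabs2Nat.id_abs. destruct (Z.sgn_spec (pos d y - P)) as [[A B]|[[A B]|[A B]]]; rewrite B; lia.
Qed.

Lemma seg_len d x y : length (seg d x y) = Z.abs_nat (pos d y - pos d x).
Proof. unfold seg. apply segn_len. Qed.

Lemma seg_in d x y z : In z (seg d x y) -> exists k, btw (pos d x) (pos d y) k /\ z = vtx d (line d x) k.
Proof.
  unfold seg. intros H. apply segn_in in H. destruct H as [i [Hi E]].
  exists (pos d x + i * Z.sgn (pos d y - pos d x)). split; auto.
  rewrite Zabs2Nat.id_abs in Hi. unfold btw.
  destruct (Z.sgn_spec (pos d y - pos d x)) as [[A B]|[[A B]|[A B]]]; rewrite B; lia.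
Qed.

Lemma seg_chain X d x y :
  line d x = line d y -> (forall k, btw (pos d x) (pos d y) k -> In (vtx d (line d x) k) X) ->
  chain (adjX_d X d) (x :: seg d x y).
Proof.
  intros Hl Hf. unfold seg. set (L := line d x) in *. set (P := pos d x) in *.
  assert (E : x = vtx d L P) by (unfold L, P; symmetry; apply vtx_eta).
  rewrite E at 1. apply segn_chain.
  intros i Hi. rewrite Zabs2Nat.id_abs in Hi.
  assert (Hs : Z.sgn (pos d y - pos d x) = 1 \/ Z.sgn (pos d y - pos d x) = -1).
  { destruct (Z.sgn_spec (pos d y - pos d x)) as [[A B]|[[A B]|[A B]]]; lia. }
  repeat split.
  - apply Hf. unfold btw. destruct (Z.sgn_spec (pos d y - P)) as [[A B]|[[A B]|[A B]]]; rewrite B; lia.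
  - apply Hf. unfold btw. destruct (Z.sgn_spec (pos d y - P)) as [[A B]|[[A B]|[A B]]]; rewrite B; lia.
  - apply edge_of_lp; rewrite ?line_vtx, ?pos_vtx; lia.
Qed.

Lemma convex X d x y : sp X d x y -> forall k, btw (pos d x) (pos d y) k -> sp X d x (vtx d (line d x) k).
Proof.
  intros [Hx [Hy [n W]]]. clear Hy. revert Hx. unfold btw.
  induction W as [a|a b c n Hab W IH]; intros Ha k Hk.
  - replace k with (pos d a) by lia. rewrite vtx_eta. apply sp_refl; auto.
  - pose proof Hab as [_ [Hb He]]. pose proof (edge_same _ _ _ He) as [El Ep].
    destruct (Z_le_dec (Z.min (pos d b) (pos d c)) k).
    destruct (Z_le_dec k (Z.max (pos d b) (pos d c))).
    + apply sp_trans with b. repeat split; auto. exists 1%nat. econstructor; eauto. constructor.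
      rewrite <- El. apply IH; auto.
    + replace k with (pos d a) by lia. rewrite vtx_eta. apply sp_refl; auto.
    + replace k with (pos d a) by lia. rewrite vtx_eta. apply sp_refl; auto.
Qed.

Lemma sp_fill X d x y : sp X d x y -> forall k, btw (pos d x) (pos d y) k -> In (vtx d (line d x) k) X.
Proof. intros H k Hk. destruct (convex X d x y H k Hk) as [_ [A _]]. auto. Qed.

Lemma sp_seg_chain X d x y : sp X d x y -> chain (adjX_d X d) (x :: seg d x y).
Proof. intros H. apply seg_chain. apply (sp_line X d); auto. apply sp_fill; auto. Qed.

Lemma sp_seg_in X d x y z : sp X d x y -> In z (seg d x y) -> sp X d x z /\ line d z = line d x.
Proof.
  intros H Hz. destruct (seg_in d x y z Hz) as [k [Hk E]]. subst. split.
  apply convex with y; auto. apply line_vtx.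
Qed.

Lemma chain_d_adj X d l : chain (adjX_d X d) l -> chain (adjX X) l.
Proof. apply chain_mono. intros a b [H1 [H2 H3]]. repeat split; auto. exists d; auto. Qed.

Lemma sp_straight X d x y : sp X d x y -> walk (adjX X) x y (Z.abs_nat (pos d y - pos d x)).
Proof.
  intros H. pose proof (chain_walk _ x (seg d x y) (chain_d_adj _ _ _ (sp_seg_chain X d x y H))) as W.
  rewrite seg_last in W by (apply (sp_line X d); auto). rewrite seg_len in W. exact W.
Qed.

Lemma gap X d p q : In p X -> In q X -> line d p = line d q -> ~ sp X d p q ->
  exists g, Z.min (pos d p) (pos d q) < g < Z.max (pos d p) (pos d q) /\ ~ In (vtx d (line d p) g) X.
Proof.
  intros Hp Hq Hl Hn. apply NNPP. intros Hc. apply Hn.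
  assert (Hf : forall k, btw (pos d p) (pos d q) k -> In (vtx d (line d p) k) X).
  { intros k Hk. unfold btw in Hk.
    destruct (Z.eq_dec k (pos d p)) as [E|E]. subst. rewrite vtx_eta; auto.
    destruct (Z.eq_dec k (pos d q)) as [E'|E']. subst. rewrite Hl, vtx_eta; auto.
    apply NNPP. intro Hk'. apply Hc. exists k. split; auto. lia. }
  repeat split; auto. exists (length (seg d p q)).
  pose proof (chain_walk _ p (seg d p q) (seg_chain X d p q Hl Hf)) as W.
  rewrite seg_last in W by auto. exact W.
Qed.

Lemma segn_cross_up d l p k g : line d g < l ->
  cntc (cross d g) (vtx d l p :: segn d l p 1 k) =
  (if Z_le_dec p (pos d g) then if Z_lt_dec (pos d g) (p + Z.of_nat k) then 1 else 0 else 0)%nat.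
Proof.
  intros Hl. revert p; induction k as [|k IH]; intros p.
  - simpl. crush.
  - change (cntc (cross d g) (vtx d l p :: segn d l p 1 (S k))) with
      (cross d g (vtx d l p) (vtx d l (p + 1)) + cntc (cross d g) (vtx d l (p + 1) :: segn d l (p + 1) 1 k))%nat.
    rewrite IH. unfold cross, crossZ. rewrite !line_vtx, !pos_vtx. crush.
Qed.

Lemma segn_cross_down d l p k g : line d g < l ->
  cntc (cross d g) (vtx d l p :: segn d l p (-1) k) =
  (if Z_le_dec (p - Z.of_nat k) (pos d g) then if Z_lt_dec (pos d g) p then 1 else 0 else 0)%nat.
Proof.
  intros Hl. revert p; induction k as [|k IH]; intros p.
  - simpl. crush.
  - change (cntc (cross d g) (vtx d l p :: segn d l p (-1) (S k))) with
      (cross d g (vtx d l p) (vtx d l (p + -1)) + cntc (cross d g) (vtx d l (p + -1) :: segn d l (p + -1) (-1) k))%nat.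
    rewrite IH. unfold cross, crossZ. rewrite !line_vtx, !pos_vtx. crush.
Qed.

Lemma seg_cross d x y g : line d g < line d x ->
  (pos d x <= pos d g < pos d y \/ pos d y <= pos d g < pos d x) ->
  cntc (cross d g) (x :: seg d x y) = 1%nat.
Proof.
  intros Hl Hb. unfold seg. set (L := line d x) in *. set (P := pos d x) in *.
  assert (E : x = vtx d L P) by (unfold L, P; symmetry; apply vtx_eta).
  rewrite E at 1.
  destruct (Z.sgn_spec (pos d y - P)) as [[A B]|[[A B]|[A B]]]; rewrite B.
  - rewrite segn_cross_up by auto. rewrite Zabs2Nat.id_abs. crush.
  - lia.
  - rewrite segn_cross_down by auto. rewrite Zabs2Nat.id_abs. crush.
Qed.

Lemma chain_last_pair {A} (R : A -> A -> Prop) x l y :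
  chain R (x :: l ++ [y]) -> R (last (x :: l) x) y.
Proof.
  revert x; induction l as [|z l IH]; intros x H.
  - simpl in H. tauto.
  - simpl in H. destruct H as [_ H]. rewrite last_cons2. apply IH. exact H.
Qed.

Lemma chain_prefix {A} (R : A -> A -> Prop) l1 l2 : chain R (l1 ++ l2) -> chain R l1.
Proof.
  induction l1 as [|x l1 IH]; simpl; auto. destruct l1 as [|y l1]; auto.
  intros [H1 H2]. split; auto.
Qed.

Lemma last_in {A} (x : A) l : In (last (x :: l) x) (x :: l).
Proof.
  revert x; induction l as [|y l IH]; intros x. left; reflexivity.
  rewrite last_cons2. right. apply IH.
Qed.

Lemma last_snoc {A} (l : list A) a d : last (l ++ [a]) d = a.
Proof. rewrite last_app. reflexivity. Qed.

Lemma chain_adj_in X l : chain (adjX X) l -> (2 <= length l)%nat -> Forall (fun z => In z X) l.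
Proof. intros H Hl. apply (chain_forall (adjX X)); auto. intros a b [Ha [Hb _]]; auto. Qed.

Theorem tform X d t t1 t2 q Mid' :
  no_holes X -> In t X -> sp X d t t1 -> sp X d t t2 ->
  chain (adjX X) (t2 :: (q :: Mid') ++ [t1]) ->
  Forall (fun z => ~ sp X d t z) (q :: Mid') ->
  Forall (fun z => line d z <= line d t) (q :: Mid') ->
  ~ sp X d q (last (q :: Mid') q) -> False.
Proof.
  intros NH Ht H1 H2 Hc Hav Hln Hnsp.
  set (s := line d t) in *. set (p := last (q :: Mid') q) in *.
  assert (Ls1 : line d t1 = s) by (symmetry; apply (sp_line X d); auto).
  assert (Ls2 : line d t2 = s) by (symmetry; apply (sp_line X d); auto).
  assert (Aq : adjX X t2 q) by (simpl in Hc; tauto).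
  assert (Ap : adjX X p t1).
  { apply (chain_last_pair (adjX X) t2 (q :: Mid') t1) in Hc.
    rewrite last_cons2 in Hc. exact Hc. }
  assert (Pin : In p (q :: Mid')) by apply last_in.
  rewrite Forall_forall in Hav, Hln.
  assert (Nq : ~ sp X d t2 q).
  { intro H. apply (Hav q); simpl; auto. apply sp_trans with t2; auto. }
  assert (Np : ~ sp X d p t1).
  { intro H. apply (Hav p); auto. apply sp_trans with t1; auto. apply sp_sym; auto. }
  pose proof (nsp_line X d _ _ Aq Nq) as Lq. pose proof (nsp_line X d _ _ Ap Np) as Lp.
  pose proof (Hln q (or_introl eq_refl)) as Lq'. pose proof (Hln p Pin) as Lp'.
  assert (LQ : line d q = s - 1) by lia. assert (LP : line d p = s - 1) by lia.
  pose proof (adj_NB d _ _ (proj2 (proj2 Aq))) as Nq'. pose proof (adj_NB d _ _ (proj2 (proj2 Ap))) as Np'.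
  unfold NB in Nq', Np'.
  assert (Inq : In q X) by (destruct Aq as [_ [A _]]; auto).
  assert (Inp : In p X) by (destruct Ap as [A _]; auto).
  destruct (gap X d q p Inq Inp ltac:(lia) Hnsp) as [gm [Hgm Hgn]].
  set (g := vtx d (line d q) gm) in *.
  assert (Lg : line d g = s - 1) by (unfold g; rewrite line_vtx; lia).
  assert (Pg : pos d g = gm) by (unfold g; rewrite pos_vtx; auto).
  set (C := t1 :: seg d t1 t2 ++ ((q :: Mid') ++ [t1])).
  assert (HC : chain (adjX X) C).
  { apply (chain_join _ t1 (seg d t1 t2) t2). apply (chain_d_adj X d). apply sp_seg_chain.
    apply sp_trans with t; auto. apply sp_sym; auto.
    apply seg_last; lia. exact Hc. }
  assert (HCl : last C t1 = t1).
  { unfold C. replace (t1 :: seg d t1 t2 ++ (q :: Mid') ++ [t1]) with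
      ((t1 :: seg d t1 t2 ++ (q :: Mid')) ++ [t1]) by (simpl; rewrite <- app_assoc; reflexivity).
    apply last_snoc. }
  pose proof (parity X d t1 (seg d t1 t2 ++ (q :: Mid') ++ [t1]) g NH
    (chain_mono _ _ _ (fun a b (H : adjX X a b) => match H with conj A (conj B D) => conj D (conj A B) end) HC)
    HCl Hgn) as Par.
  fold C in Par.
  unfold C in Par. rewrite (cntc_join _ t1 (seg d t1 t2) t2) in Par by (apply seg_last; lia).
  rewrite seg_cross in Par.
  2: lia.
  2: lia.
  change (cntc (cross d g) (t2 :: (q :: Mid') ++ [t1])) with
    (cross d g t2 q + cntc (cross d g) (q :: Mid' ++ [t1]))%nat in Par.
  rewrite (cntc_join _ q Mid' p [t1]) in Par by reflexivity.
  assert (Z1 : cross d g t2 q = 0%nat).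
  { unfold cross, crossZ. rewrite Lg, Pg. crush. }
  assert (Z2 : cntc (cross d g) [p; t1] = 0%nat).
  { simpl. unfold cross, crossZ. rewrite Lg, Pg. crush. }
  assert (Z3 : cntc (cross d g) (q :: Mid') = 0%nat).
  { apply cntc_zero. intros x y Hx Hy.
    assert (Kx : ~ (line d x = s /\ pos d x = gm)).
    { intros [E1 E2]. apply (Hav x Hx).
      replace x with (vtx d (line d t1) gm).
      apply sp_trans with t1; auto. apply convex with t2. apply sp_trans with t; auto. apply sp_sym; auto.
      unfold btw; lia.
      rewrite <- E2, Ls1, <- E1. apply vtx_eta. }
    assert (Ky : ~ (line d y = s /\ pos d y = gm)).
    { intros [E1 E2]. apply (Hav y Hy).
      replace y with (vtx d (line d t1) gm).
      apply sp_trans with t1; auto. apply convex with t2. apply sp_trans with t; auto. apply sp_sym; auto.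
      unfold btw; lia.
      rewrite <- E2, Ls1, <- E1. apply vtx_eta. }
    pose proof (Hln x Hx). pose proof (Hln y Hy).
    unfold cross, crossZ. rewrite Lg, Pg. crush. }
  rewrite Z1, Z2, Z3 in Par. simpl in Par. discriminate.
Qed.

Lemma first_occ {A} (P : A -> Prop) l : (exists x, In x l /\ P x) ->
  exists l1 x l2, l = l1 ++ x :: l2 /\ P x /\ Forall (fun y => ~ P y) l1.
Proof.
  induction l as [|a l IH]; intros [x [Hx Px]]; [destruct Hx|].
  destruct (classic (P a)) as [Pa|Pa].
  - exists [], a, l. auto.
  - destruct Hx as [E|Hx]; [subst; contradiction|].
    destruct (IH (ex_intro _ x (conj Hx Px))) as [l1 [y [l2 [E [Py F]]]]].
    exists (a :: l1), y, l2. subst. simpl. auto.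
Qed.

Lemma last_occ {A} (P : A -> Prop) l : (exists x, In x l /\ P x) ->
  exists l1 x l2, l = l1 ++ x :: l2 /\ P x /\ Forall (fun y => ~ P y) l2.
Proof.
  induction l as [|a l IH]; intros [x [Hx Px]]; [destruct Hx|].
  destruct (classic (exists z, In z l /\ P z)) as [Ex|Ex].
  - destruct (IH Ex) as [l1 [y [l2 [E [Py F]]]]]. exists (a :: l1), y, l2. subst. auto.
  - exists [], a, l. split; auto. destruct Hx as [E|Hx]; [subst|exfalso; eauto].
    split; auto. rewrite Forall_forall. intros z Hz Pz. eauto.
Qed.

Lemma chain_head {A} (R : A -> A -> Prop) x l y : chain R (x :: l ++ [y]) -> R x (hd y (l ++ [y])).
Proof. destruct l; simpl; tauto. Qed.

Lemma last_self {A} (x : A) l : last (x :: l) x = last l x.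
Proof. destruct l. reflexivity. rewrite last_cons2. apply last_dflt. Qed.

Definition cnt d s (l : list vertex) : nat := length (filter (fun z => Z.eqb (line d z) s) l).

Lemma cnt_app d s l1 l2 : cnt d s (l1 ++ l2) = (cnt d s l1 + cnt d s l2)%nat.
Proof. unfold cnt. rewrite filter_app, length_app. reflexivity. Qed.

Lemma cnt_zero d s l : Forall (fun z => line d z <> s) l -> cnt d s l = 0%nat.
Proof.
  induction l as [|a l IH]; intros F; simpl; auto. inversion F; subst.
  unfold cnt in *. simpl. destruct (Z.eqb_spec (line d a) s); [contradiction|]. auto.
Qed.

Lemma cnt_pos d s l : (cnt d s l <> 0)%nat -> exists y, In y l /\ line d y = s.
Proof.
  induction l as [|a l IH]; simpl; intros H; [unfold cnt in H; simpl in H; lia|].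
  unfold cnt in H. simpl in H. destruct (Z.eqb_spec (line d a) s).
  - exists a; auto.
  - destruct (IH H) as [y [Hy E]]. exists y; auto.
Qed.

Lemma cnt_le d s l : (cnt d s l <= length l)%nat.
Proof. unfold cnt. apply filter_length_le. Qed.

Definition Good X d t t1 t2 s Mid :=
  Mid <> [] /\ chain (adjX X) (t2 :: Mid ++ [t1]) /\ Forall (fun z => ~ sp X d t z) Mid /\
  Forall (fun z => line d z <= s) Mid /\ ~ sp X d (hd t Mid) (last Mid t).

Lemma tform' X d t t1 t2 Mid : no_holes X -> In t X -> sp X d t t1 -> sp X d t t2 ->
  Good X d t t1 t2 (line d t) Mid -> False.
Proof.
  intros NH Ht H1 H2 [Hne [Hc [Hav [Hl Hs]]]]. destruct Mid as [|q Mid']; [congruence|].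
  apply (tform X d t t1 t2 q Mid'); auto. change (hd t (q :: Mid')) with q in Hs. rewrite (last_dflt q Mid' t q) in Hs. exact Hs.
Qed.

Lemma Good_in X d t t1 t2 s Mid z : Good X d t t1 t2 s Mid -> In z Mid -> In z X.
Proof.
  intros [Hne [Hc _]] Hz. apply chain_adj_in in Hc.
  - rewrite Forall_forall in Hc. apply Hc. simpl. right. apply in_or_app. auto.
  - destruct Mid; [congruence|]. simpl. rewrite length_app. simpl. lia.
Qed.

Lemma last_or {A} (x : A) l : last (x :: l) x = x \/ In (last (x :: l) x) l.
Proof. pose proof (last_in x l) as H. destruct H; auto. Qed.

Lemma hd_or {A} (x : A) l : hd x (l ++ [x]) = x \/ In (hd x (l ++ [x])) l.
Proof. destruct l; simpl; auto. Qed.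

Lemma last_app_cons {A} (l l' : list A) x d : last (l ++ x :: l') d = last (x :: l') x.
Proof. rewrite last_app. apply last_dflt. Qed.

Lemma cnt_one d s z : line d z = s -> cnt d s [z] = 1%nat.
Proof. intros E. unfold cnt. simpl. rewrite E, Z.eqb_refl. reflexivity. Qed.

Lemma surgery X d t t1 t2 s Mid : no_holes X -> In t X -> sp X d t t1 -> sp X d t t2 ->
  line d t < s -> Good X d t t1 t2 s Mid -> (exists y, In y Mid /\ line d y = s) ->
  exists Mid2, Good X d t t1 t2 s Mid2 /\ (cnt d s Mid2 < cnt d s Mid)%nat.
Proof.
  intros NH Ht H1 H2 Hs G [y [Hy Ly]].
  pose proof G as [Hne [Hc [Hav [Hln Hsp]]]].
  assert (Iny : In y X) by (eapply Good_in; eauto).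
  assert (Ls1 : line d t1 = line d t) by (symmetry; apply (sp_line X d); auto).
  assert (Ls2 : line d t2 = line d t) by (symmetry; apply (sp_line X d); auto).
  destruct (first_occ (sp X d y) Mid (ex_intro _ y (conj Hy (sp_refl X d y Iny))))
    as [A1 [u1 [B0 [EM [Pu1 FA1]]]]].
  destruct (last_occ (sp X d y) (u1 :: B0) (ex_intro _ u1 (conj (in_eq _ _) Pu1)))
    as [C0 [u2 [A2 [EB [Pu2 FA2]]]]].
  assert (EM2 : Mid = A1 ++ C0 ++ u2 :: A2) by (rewrite EM, EB; reflexivity).
  assert (Lu1 : line d u1 = s) by (rewrite <- Ly; symmetry; apply (sp_line X d); auto).
  assert (Lu2 : line d u2 = s) by (rewrite <- Ly; symmetry; apply (sp_line X d); auto).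
  rewrite Forall_forall in Hav, Hln, FA1, FA2.
  assert (InA1 : forall z, In z A1 -> In z Mid) by (intros z Hz; rewrite EM2; apply in_or_app; auto).
  assert (InA2 : forall z, In z A2 -> In z Mid)
    by (intros z Hz; rewrite EM2; apply in_or_app; right; apply in_or_app; right; right; auto).
  set (q2 := last (t2 :: A1) t2).
  set (p2 := hd t1 (A2 ++ [t1])).
  assert (Aq : adjX X q2 u1).
  { assert (Hc' := Hc). rewrite EM in Hc'.
    replace (t2 :: (A1 ++ u1 :: B0) ++ [t1]) with (t2 :: A1 ++ u1 :: (B0 ++ [t1])) in Hc'
      by (rewrite <- app_assoc; reflexivity).
    apply chain_split in Hc'. destruct Hc' as [Hc' _]. apply chain_last_pair in Hc'. exact Hc'. }
  assert (Ap : adjX X u2 p2).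
  { assert (Hc' := Hc). rewrite EM2 in Hc'.
    replace (t2 :: (A1 ++ C0 ++ u2 :: A2) ++ [t1]) with (t2 :: (A1 ++ C0) ++ u2 :: (A2 ++ [t1])) in Hc'
      by (rewrite <- !app_assoc; reflexivity).
    apply chain_split in Hc'. destruct Hc' as [_ Hc']. apply chain_head in Hc'. exact Hc'. }
  assert (Nq : ~ sp X d y q2).
  { destruct (last_or t2 A1) as [E|E]; fold q2 in E.
    - rewrite E. intro S. apply (sp_line X d) in S. lia.
    - apply FA1; auto. }
  assert (Np : ~ sp X d y p2).
  { destruct (hd_or t1 A2) as [E|E]; fold p2 in E.
    - rewrite E. intro S. apply (sp_line X d) in S. lia.
    - apply FA2; auto. }
  assert (Lq2 : line d q2 = s - 1).
  { assert (line d q2 <= s).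
    { destruct (last_or t2 A1) as [E|E]; fold q2 in E. rewrite E; lia. apply Hln; auto. }
    assert (~ sp X d q2 u1) by (intro S; apply Nq; apply sp_trans with u1; auto; apply sp_sym; auto).
    pose proof (nsp_line X d _ _ Aq H0). lia. }
  assert (Lp2 : line d p2 = s - 1).
  { assert (line d p2 <= s).
    { destruct (hd_or t1 A2) as [E|E]; fold p2 in E. rewrite E; lia. apply Hln; auto. }
    assert (~ sp X d u2 p2) by (intro S; apply Np; apply sp_trans with u2; auto).
    pose proof (nsp_line X d _ _ Ap H0). lia. }
  destruct (classic (sp X d q2 p2)) as [Sp|Nsp].
  - destruct A1 as [|a1 A1'].
    + exfalso. assert (Eq : q2 = t2) by reflexivity.
      destruct A2 as [|a2 A2'].
      * apply Hsp. replace (hd t Mid) with u1 by (rewrite EM; reflexivity).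
        replace (last Mid t) with u2 by (rewrite EM2; simpl; rewrite last_snoc; reflexivity).
        apply sp_trans with y; auto. apply sp_sym; auto.
      * apply (Hav a2). apply InA2. simpl; auto. apply sp_trans with t2; auto.
    + destruct A2 as [|a2 A2'].
      * exfalso. assert (Ep : p2 = t1) by reflexivity.
        assert (E : In q2 (a1 :: A1')) by (unfold q2; rewrite last_cons2; apply last_in).
        apply (Hav q2). apply InA1; auto. apply sp_trans with t1; auto. apply sp_sym. rewrite <- Ep. exact Sp.
      * assert (Ep : p2 = a2) by reflexivity.
        assert (Iq2 : In q2 Mid).
        { apply InA1. unfold q2; rewrite last_cons2; apply last_in. }
        set (Mid2 := (a1 :: A1') ++ seg d q2 a2 ++ A2').
        exists Mid2. split.
        { split; [unfold Mid2; simpl; congruence|].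
          split.
          { unfold Mid2.
            replace (t2 :: ((a1 :: A1') ++ seg d q2 a2 ++ A2') ++ [t1]) with
              (t2 :: (a1 :: A1') ++ (seg d q2 a2 ++ (A2' ++ [t1]))) by (rewrite <- !app_assoc; reflexivity).
            apply (chain_join _ t2 (a1 :: A1') q2).
            - assert (Hc2 := Hc). rewrite EM2 in Hc2.
              apply (chain_prefix _ _ ((C0 ++ u2 :: a2 :: A2') ++ [t1])).
              replace ((t2 :: a1 :: A1') ++ (C0 ++ u2 :: a2 :: A2') ++ [t1]) with
                (t2 :: ((a1 :: A1') ++ C0 ++ u2 :: a2 :: A2') ++ [t1]) by (simpl; rewrite <- !app_assoc; reflexivity).
              exact Hc2.
            - reflexivity.
            - apply (chain_join _ q2 (seg d q2 a2) a2).
              + apply (chain_d_adj X d). apply sp_seg_chain. rewrite <- Ep; auto.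
              + apply seg_last. rewrite <- Ep. apply (sp_line X d); auto.
              + rewrite EM2 in Hc.
                replace (t2 :: ((a1 :: A1') ++ C0 ++ u2 :: a2 :: A2') ++ [t1]) with
                  (t2 :: ((a1 :: A1') ++ C0 ++ [u2]) ++ a2 :: (A2' ++ [t1])) in Hc
                  by (rewrite <- !app_assoc; reflexivity).
                apply chain_split in Hc. tauto. }
          split.
          { rewrite Forall_forall. intros z Hz. unfold Mid2 in Hz.
            apply in_app_or in Hz. destruct Hz as [Hz|Hz]. apply Hav, InA1; auto.
            apply in_app_or in Hz. destruct Hz as [Hz|Hz].
            - rewrite <- Ep in Hz. destruct (sp_seg_in X d q2 p2 z Sp Hz) as [S _].
              intro S'. apply (Hav q2 Iq2). apply sp_trans with z; auto. apply sp_sym; auto.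
            - apply Hav, InA2. simpl; auto. }
          split.
          { rewrite Forall_forall. intros z Hz. unfold Mid2 in Hz.
            apply in_app_or in Hz. destruct Hz as [Hz|Hz]. apply Hln, InA1; auto.
            apply in_app_or in Hz. destruct Hz as [Hz|Hz].
            - rewrite <- Ep in Hz. destruct (sp_seg_in X d q2 p2 z Sp Hz) as [_ L]. lia.
            - apply Hln, InA2. simpl; auto. }
          { replace (hd t Mid2) with (hd t Mid) by (rewrite EM2; reflexivity).
            replace (last Mid2 t) with (last Mid t). exact Hsp.
            rewrite EM2. unfold Mid2.
            replace ((a1 :: A1') ++ C0 ++ u2 :: a2 :: A2') with (((a1 :: A1') ++ C0 ++ [u2]) ++ a2 :: A2')
              by (rewrite <- !app_assoc; reflexivity).
            replace ((a1 :: A1') ++ seg d q2 a2 ++ A2') with (((a1 :: A1') ++ seg d q2 a2) ++ A2')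
              by (rewrite <- !app_assoc; reflexivity).
            rewrite last_app_cons. rewrite last_app. rewrite last_app.
            assert (Eq2 : last (a1 :: A1') t = q2) by (unfold q2; rewrite last_cons2; apply last_dflt).
            rewrite Eq2, <- (last_self q2 (seg d q2 a2)), seg_last. rewrite last_self. reflexivity.
            rewrite <- Ep. apply (sp_line X d); auto. } }
        { unfold Mid2. rewrite EM2. rewrite !cnt_app.
          replace (u2 :: a2 :: A2') with ([u2] ++ [a2] ++ A2') by reflexivity.
          rewrite !cnt_app. rewrite (cnt_one d s u2 Lu2).
          rewrite (cnt_zero d s (seg d q2 a2)). lia.
          rewrite Forall_forall. intros z Hz. rewrite <- Ep in Hz.
          destruct (sp_seg_in X d q2 p2 z Sp Hz) as [_ L]. lia. }
  - exfalso. apply (tform' X d y u1 u2 (A2 ++ t1 :: seg d t1 t2 ++ A1)); auto.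
    assert (S12 : sp X d t1 t2) by (apply sp_trans with t; auto; apply sp_sym; auto).
    assert (Hc1 : chain (adjX X) (t2 :: A1 ++ [u1])).
    { assert (Hc' := Hc). rewrite EM in Hc'.
      replace (t2 :: (A1 ++ u1 :: B0) ++ [t1]) with (t2 :: A1 ++ u1 :: (B0 ++ [t1])) in Hc'
        by (rewrite <- app_assoc; reflexivity).
      apply chain_split in Hc'. tauto. }
    assert (Hc2 : chain (adjX X) (u2 :: A2 ++ [t1])).
    { assert (Hc' := Hc). rewrite EM2 in Hc'.
      replace (t2 :: (A1 ++ C0 ++ u2 :: A2) ++ [t1]) with (t2 :: (A1 ++ C0) ++ u2 :: (A2 ++ [t1])) in Hc'
        by (rewrite <- !app_assoc; reflexivity).
      apply chain_split in Hc'. tauto. }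
    split; [destruct A2; simpl; congruence|].
    split.
    { replace (u2 :: (A2 ++ t1 :: seg d t1 t2 ++ A1) ++ [u1]) with
        (u2 :: (A2 ++ [t1]) ++ (seg d t1 t2 ++ (A1 ++ [u1])))
        by (rewrite <- !app_assoc; simpl; rewrite <- !app_assoc; reflexivity).
      apply (chain_join _ u2 (A2 ++ [t1]) t1); auto.
      - rewrite last_self. apply last_snoc.
      - apply (chain_join _ t1 (seg d t1 t2) t2); auto.
        + apply (chain_d_adj X d). apply sp_seg_chain; auto.
        + apply seg_last. lia. }
    assert (Hseg : forall z, In z (seg d t1 t2) -> line d z = line d t).
    { intros z Hz. destruct (sp_seg_in X d t1 t2 z S12 Hz) as [_ L]. lia. }
    split.
    { rewrite Forall_forall. intros z Hz. apply in_app_or in Hz. destruct Hz as [Hz|[Hz|Hz]].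
      - apply FA2; auto.
      - subst z. intro S. apply (sp_line X d) in S. lia.
      - apply in_app_or in Hz. destruct Hz as [Hz|Hz].
        + intro S. apply (sp_line X d) in S. apply Hseg in Hz. lia.
        + apply FA1; auto. }
    split.
    { rewrite Forall_forall. intros z Hz. apply in_app_or in Hz. destruct Hz as [Hz|[Hz|Hz]].
      - rewrite Ly. apply Hln; auto.
      - subst z. lia.
      - apply in_app_or in Hz. destruct Hz as [Hz|Hz].
        + apply Hseg in Hz. lia.
        + rewrite Ly. apply Hln; auto. }
    replace (hd y (A2 ++ t1 :: seg d t1 t2 ++ A1)) with p2 by (destruct A2; reflexivity).
    replace (last (A2 ++ t1 :: seg d t1 t2 ++ A1) y) with q2.
    { intro S. apply Nsp. apply sp_sym; auto. }
    replace (A2 ++ t1 :: seg d t1 t2 ++ A1) with ((A2 ++ t1 :: seg d t1 t2) ++ A1)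
      by (rewrite <- app_assoc; reflexivity).
    rewrite last_app, last_app_cons, seg_last by lia. unfold q2. rewrite last_self. reflexivity.
Qed.

Lemma cnt_in d s l z : In z l -> line d z = s -> (1 <= cnt d s l)%nat.
Proof.
  induction l as [|a l IH]; simpl; [tauto|]. intros [E|H] L; unfold cnt in *; simpl.
  - subst. rewrite Z.eqb_refl. simpl. lia.
  - destruct (Z.eqb (line d a) s); simpl; specialize (IH H L); lia.
Qed.

Lemma Good_weaken X d t t1 t2 s s' Mid : s <= s' -> Good X d t t1 t2 s Mid -> Good X d t t1 t2 s' Mid.
Proof.
  intros Hs [A [B [C0 [D0 E0]]]]. repeat split; auto.
  rewrite Forall_forall in *. intros z Hz. specialize (D0 z Hz). lia.
Qed.

Lemma Good_drop X d t t1 t2 s Mid : Good X d t t1 t2 s Mid -> cnt d s Mid = 0%nat -> Good X d t t1 t2 (s - 1) Mid.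
Proof.
  intros [A [B [C0 [D0 E0]]]] Hc. repeat split; auto.
  rewrite Forall_forall in *. intros z Hz. specialize (D0 z Hz).
  destruct (Z.eq_dec (line d z) s). pose proof (cnt_in d s Mid z Hz e). lia. lia.
Qed.

Lemma cut_ind X d t t1 t2 : no_holes X -> In t X -> sp X d t t1 -> sp X d t t2 ->
  forall m k s Mid, s - line d t <= Z.of_nat m -> (cnt d s Mid <= k)%nat -> Good X d t t1 t2 s Mid -> False.
Proof.
  intros NH Ht H1 H2. induction m as [|m IHm]; intros k.
  - intros s Mid Hm Hk G. apply (tform' X d t t1 t2 Mid); auto. apply Good_weaken with s; auto. lia.
  - induction k as [|k IHk]; intros s Mid Hm Hk G.
    + destruct (Z_le_dec s (line d t)).
      * apply (tform' X d t t1 t2 Mid); auto. apply Good_weaken with s; auto.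
      * apply (IHm (length Mid) (s - 1) Mid). lia. apply cnt_le. apply Good_drop; auto. lia.
    + destruct (Z_le_dec s (line d t)).
      * apply (tform' X d t t1 t2 Mid); auto. apply Good_weaken with s; auto.
      * destruct (Nat.eq_dec (cnt d s Mid) 0) as [E|E].
        -- apply (IHm (length Mid) (s - 1) Mid). lia. apply (cnt_le d). apply Good_drop; auto.
        -- destruct (surgery X d t t1 t2 s Mid NH Ht H1 H2 ltac:(lia) G (cnt_pos d s Mid E)) as [Mid2 [G2 C2]].
           apply (IHk s Mid2); auto. lia.
Qed.

Fixpoint lbound d (l : list vertex) : Z :=
  match l with [] => 0 | y :: l' => Z.abs (line d y) + lbound d l' end.

Lemma lbound_spec d l z : In z l -> line d z <= lbound d l.
Proof.
  induction l as [|a l IH]; simpl; [tauto|]. intros [E|H].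
  - subst. assert (0 <= lbound d l) by (clear; induction l; simpl; lia). lia.
  - specialize (IH H). lia.
Qed.

Theorem cut X d t t1 t2 Mid : no_holes X -> In t X -> sp X d t t1 -> sp X d t t2 -> Mid <> [] ->
  chain (adjX X) (t2 :: Mid ++ [t1]) -> Forall (fun z => ~ sp X d t z) Mid ->
  ~ sp X d (hd t Mid) (last Mid t) -> False.
Proof.
  intros NH Ht H1 H2 Hne Hc Hav Hs.
  set (s := Z.abs (line d t) + lbound d Mid).
  assert (0 <= lbound d Mid) by (clear; induction Mid; simpl; lia).
  apply (cut_ind X d t t1 t2 NH Ht H1 H2 (Z.to_nat (s - line d t)) (cnt d s Mid) s Mid); auto.
  unfold s; lia.
  repeat split; auto. rewrite Forall_forall. intros z Hz. apply (lbound_spec d) in Hz. unfold s. lia.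
Qed.

Lemma pw_sp_l X d w w' v n : sp X d w w' -> portal_walk X d w v n -> portal_walk X d w' v n.
Proof.
  intros S [u' [v' [S1 [S2 W]]]]. exists u', v'. split; [|split; auto].
  apply sp_trans with w; auto. apply sp_sym; auto.
Qed.

Lemma pw_step X d w w' v n : adjX X w w' -> ~ sp X d w w' -> portal_walk X d w' v n -> portal_walk X d w v (S n).
Proof.
  intros A N [u' [v' [S1 [S2 W]]]]. pose proof A as [Hw [Hw' _]].
  exists w, v'. split; [apply sp_refl; auto|]. split; auto.
  econstructor; eauto. split; auto. split; [destruct S1 as [_ [B _]]; auto|]. split.
  - intro S. apply N. apply sp_trans with u'; auto. apply sp_sym; auto.
  - exists w, w'. split; [apply sp_refl; auto|]. split; auto. apply sp_sym; auto.
Qed.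

Lemma pa_line X d x y : portal_adj X d x y -> line d y - line d x = 1 \/ line d y - line d x = -1.
Proof.
  intros [Hx [Hy [N [p' [q' [S1 [S2 A]]]]]]].
  assert (N' : ~ sp X d p' q').
  { intro S. apply N. apply sp_trans with p'; auto. apply sp_trans with q'; auto. apply sp_sym; auto. }
  pose proof (nsp_line X d _ _ A N'). apply (sp_line X d) in S1. apply (sp_line X d) in S2. lia.
Qed.

Lemma walk_pa_par X d x y n : walk (portal_adj X d) x y n -> exists k, line d x - line d y + Z.of_nat n = 2 * k.
Proof.
  induction 1 as [a|a b c n P W [k IH]].
  - exists 0; lia.
  - pose proof (pa_line X d a b P). destruct H as [H|H].
    + exists k. lia.
    + exists (k + 1). lia.
Qed.

Lemma pw_parity X d w v n : portal_walk X d w v n -> exists k, line d w - line d v + Z.of_nat n = 2 * k.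
Proof.
  intros [u' [v' [S1 [S2 W]]]]. apply (sp_line X d) in S1. apply (sp_line X d) in S2.
  destruct (walk_pa_par X d _ _ _ W) as [k Hk]. exists k. lia.
Qed.

Lemma awalk_pw X d w v n : In v X -> walk (adjX X) w v n -> exists m, portal_walk X d w v m.
Proof.
  intros Hv W. induction W as [a|a b c n A W IH].
  - exists 0%nat. exists a, a. split; [apply sp_refl; auto|]. split; [apply sp_refl; auto|]. constructor.
  - destruct (IH Hv) as [m P]. destruct (classic (sp X d a b)) as [Hs|Hs].
    + exists m. apply pw_sp_l with b; auto. apply sp_sym; auto.
    + exists (Datatypes.S m). apply pw_step with b; auto.
Qed.

Lemma min_ex (P : nat -> Prop) : (exists n, P n) -> exists n, P n /\ forall m, P m -> (n <= m)%nat.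
Proof.
  intros [n Hn]. induction n as [n IH] using (well_founded_induction lt_wf).
  destruct (classic (exists m, (m < n)%nat /\ P m)) as [[m [Hm Pm]]|N].
  - apply (IH m Hm Pm).
  - exists n. split; auto. intros m Pm. destruct (Nat.lt_ge_cases m n); auto. exfalso; eauto.
Qed.

Definition Hd X d v w : nat := epsilon (inhabits 0%nat) (fun n => is_portal_dist X d w v n).

Lemma H_spec X d v w : GX_connected X -> In w X -> In v X -> is_portal_dist X d w v (Hd X d v w).
Proof.
  intros C Hw Hv. unfold Hd. apply epsilon_spec.
  destruct (C w v Hw Hv) as [n W]. destruct (awalk_pw X d w v n Hv W) as [m P].
  apply (min_ex (fun k => portal_walk X d w v k)). eauto.
Qed.

Lemma H_le X d v w m : GX_connected X -> In w X -> In v X -> portal_walk X d w v m -> (Hd X d v w <= m)%nat.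
Proof. intros C Hw Hv P. apply (H_spec X d v w C Hw Hv); auto. Qed.

Lemma H_pw X d v w : GX_connected X -> In w X -> In v X -> portal_walk X d w v (Hd X d v w).
Proof. intros C Hw Hv. apply (H_spec X d v w C Hw Hv); auto. Qed.

Lemma H_sp X d v w w' : GX_connected X -> In v X -> sp X d w w' -> Hd X d v w = Hd X d v w'.
Proof.
  intros C Hv S. pose proof S as [Hw [Hw' _]]. apply Nat.le_antisymm.
  - apply H_le; auto. apply pw_sp_l with w'. apply sp_sym; auto. apply H_pw; auto.
  - apply H_le; auto. apply pw_sp_l with w; auto. apply H_pw; auto.
Qed.

Lemma H_adj X d v w w' : GX_connected X -> In v X -> adjX X w w' -> ~ sp X d w w' ->
  Hd X d v w = S (Hd X d v w') \/ Hd X d v w' = S (Hd X d v w).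
Proof.
  intros C Hv A N. pose proof A as [Hw [Hw' _]].
  assert (L1 : (Hd X d v w <= S (Hd X d v w'))%nat).
  { apply H_le; auto. apply pw_step with w'; auto. apply H_pw; auto. }
  assert (L2 : (Hd X d v w' <= S (Hd X d v w))%nat).
  { apply H_le; auto. apply pw_step with w; auto. apply adjX_sym; auto.
    intro S. apply N. apply sp_sym; auto. apply H_pw; auto. }
  destruct (pw_parity X d w v _ (H_pw X d v w C Hw Hv)) as [k1 K1].
  destruct (pw_parity X d w' v _ (H_pw X d v w' C Hw' Hv)) as [k2 K2].
  pose proof (nsp_line X d _ _ A N). lia.
Qed.

Lemma H_v X d v : GX_connected X -> In v X -> Hd X d v v = 0%nat.
Proof.
  intros C Hv. assert (Hd X d v v <= 0)%nat; [|lia]. apply H_le; auto.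
  exists v, v. split; [apply sp_refl; auto|]. split; [apply sp_refl; auto|]. constructor.
Qed.

Definition Low X d v (n : nat) z := exists n', (n' <= n)%nat /\ portal_walk X d z v n'.

Lemma straight_P X d (P : vertex -> Prop) w z0 : sp X d w z0 -> (forall z, sp X d w z -> P z) ->
  exists k, walk (fun x y => adjX X x y /\ P x /\ P y) w z0 k.
Proof.
  intros S HP. exists (length (seg d w z0)).
  assert (Hc : chain (fun x y => adjX X x y /\ P x /\ P y) (w :: seg d w z0)).
  { apply chain_restrict. apply (chain_d_adj X d). apply sp_seg_chain; auto.
    constructor. apply HP. apply sp_refl. destruct S; auto.
    rewrite Forall_forall. intros z Hz. apply HP. apply (sp_seg_in X d w z0 z S Hz). }
  pose proof (chain_walk _ _ _ Hc) as W. rewrite seg_last in W. exact W.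
  apply (sp_line X d); auto.
Qed.

Lemma descent X d v : In v X -> forall n w, In w X -> portal_walk X d w v n ->
  exists k, walk (fun x y => adjX X x y /\ Low X d v n x /\ Low X d v n y) w v k.
Proof.
  intros Hv. induction n as [|n IH]; intros w Hw P.
  - destruct P as [u' [v' [S1 [S2 W]]]]. inversion W; subst.
    apply (straight_P X d). apply sp_trans with v'; auto. apply sp_sym; auto.
    intros z Sz. exists 0%nat. split; auto. exists v, v. split.
    + apply sp_trans with w. apply sp_sym; auto. apply sp_trans with v'; auto. apply sp_sym; auto.
    + split; [apply sp_refl; auto|constructor].
  - pose proof P as [u' [v' [S1 [S2 W]]]]. inversion W as [|a x c m PA W' E1 E2 E3]; subst.
    destruct PA as [Hu [Hx [N [p' [q' [Sp [Sq A]]]]]]].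
    assert (Pq : portal_walk X d q' v n).
    { exists x, v'. split; [apply sp_sym; auto|]. split; auto. }
    assert (Hq : In q' X) by (destruct A as [_ [B _]]; auto).
    destruct (IH q' Hq Pq) as [k1 W1].
    assert (W1' : walk (fun x y => adjX X x y /\ Low X d v (S n) x /\ Low X d v (S n) y) q' v k1).
    { apply walk_mono with (2 := W1). intros a b [Ab [[n1 [L1 P1]] [n2 [L2 P2]]]].
      split; auto. split; [exists n1|exists n2]; split; auto; lia. }
    destruct (straight_P X d (Low X d v (S n)) w p') as [k0 W0].
    + apply sp_trans with u'; auto.
    + intros z Sz. exists (S n). split; auto. apply pw_sp_l with w; auto.
    + exists (k0 + S k1)%nat. eapply walk_app; [exact W0|]. econstructor; [|exact W1'].
      split; auto. split.
      * exists (S n). split; auto. apply pw_sp_l with w; auto. apply sp_trans with u'; auto.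
      * exists n. split; auto.
Qed.

Lemma Low_nsp X d v w z : GX_connected X -> In v X -> Low X d v (Hd X d v w - 1) z ->
  (1 <= Hd X d v w)%nat -> ~ sp X d w z.
Proof.
  intros C Hv [n' [L P]] H1 S. pose proof S as [Hw [Hz _]].
  pose proof (H_le X d v z n' C Hz Hv P). rewrite <- (H_sp X d v w z C Hv S) in H. lia.
Qed.

Theorem UP X d v a b1 w w2 : GX_connected X -> no_holes X -> In v X ->
  adjX X a b1 -> ~ sp X d a b1 -> sp X d b1 w -> adjX X w w2 -> ~ sp X d w w2 ->
  (Hd X d v a + 1 = Hd X d v w)%nat -> (Hd X d v w2 + 1 = Hd X d v w)%nat -> sp X d a w2.
Proof.
  intros C NH Hv Aab Nab Sbw Aww Nww Ha Hw2. apply NNPP. intro N.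
  pose proof Aab as [Ia [Ib _]]. pose proof Aww as [Iw [Iw2 _]].
  set (n := (Hd X d v w - 1)%nat).
  set (Rr := fun x y => adjX X x y /\ Low X d v n x /\ Low X d v n y).
  destruct (descent X d v Hv (Hd X d v a) a Ia (H_pw X d v a C Ia Hv)) as [k1 W1].
  destruct (descent X d v Hv (Hd X d v w2) w2 Iw2 (H_pw X d v w2 C Iw2 Hv)) as [k2 W2].
  replace (Hd X d v a) with n in W1 by (unfold n; lia).
  replace (Hd X d v w2) with n in W2 by (unfold n; lia).
  fold Rr in W1, W2.
  assert (W : walk Rr w2 a (k2 + k1)).
  { eapply walk_app; [exact W2|]. apply walk_sym; auto.
    intros x y [A [L1 L2]]. split; auto. apply adjX_sym; auto. }
  destruct (walk_chain _ _ _ _ W) as [l [Hc [Hl _]]].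
  assert (HF : Forall (Low X d v n) (w2 :: l)).
  { destruct l as [|z l].
    - constructor; [|constructor]. exists (Hd X d v w2). split. unfold n; lia. apply H_pw; auto.
    - apply (chain_forall Rr); auto. intros x y [_ [L1 L2]]; auto. simpl; lia. }
  apply (cut X d w b1 w (w2 :: l) NH Iw).
  - apply sp_sym; auto.
  - apply sp_refl; auto.
  - congruence.
  - simpl. split; auto.
    apply (chain_join _ w2 l a [b1]).
    + apply (chain_mono Rr); auto. intros x y [A _]; auto.
    + exact Hl.
    + simpl. auto.
  - rewrite Forall_forall in HF |- *. intros z Hz. apply Low_nsp with v; auto. lia.
  - simpl hd. rewrite (last_dflt w2 l w w2). rewrite Hl. intro S. apply N. apply sp_sym; auto.
Qed.

Lemma noup X d v : GX_connected X -> no_holes X -> In v X ->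
  forall n w a b1 m, walk (adjX X) w v n -> adjX X a b1 -> ~ sp X d a b1 -> sp X d b1 w ->
  walk (adjX X) b1 w m -> (Hd X d v a + 1 = Hd X d v w)%nat ->
  (forall k, walk (adjX X) a v k -> (S m + n <= k)%nat) -> False.
Proof.
  intros C NH Hv. induction n as [|n IH]; intros w a b1 m W Aab Nab Sbw Wbw Hh Hmin.
  - inversion W; subst. rewrite H_v in Hh; auto. lia.
  - inversion W as [|w' w2 v' n' Aww W2 E1 E2 E3]; subst.
    destruct (classic (sp X d w w2)) as [Sww|Nww].
    + apply (IH w2 a b1 (S m)); auto.
      * apply sp_trans with w; auto.
      * eapply walk_snoc; eauto.
      * rewrite <- (H_sp X d v w w2); auto.
      * intros k Wk. specialize (Hmin k Wk). lia.
    + destruct (H_adj X d v w w2 C Hv Aww Nww) as [Hd1|Hd1].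
      * (* descending: UP gives shortcut *)
        assert (Saw : sp X d a w2) by (apply (UP X d v a b1 w w2); auto; lia).
        pose proof (sp_straight X d a w2 Saw) as Wst.
        assert (Wav := walk_app _ _ _ _ _ _ Wst W2).
        specialize (Hmin _ Wav).
        pose proof (walk_pos X d b1 w m Wbw) as Pb.
        pose proof (sp_line X d _ _ Sbw) as L1. pose proof (sp_line X d _ _ Saw) as L2.
        pose proof (nsp_line X d _ _ Aab Nab) as L3.
        pose proof Aab as [_ [_ Tab]]. pose proof (adj_NB d _ _ (tri_adj_sym _ _ Tab)) as N1.
        pose proof Aww as [_ [_ Tww]]. pose proof (adj_NB d _ _ Tww) as N2.
        unfold NB in N1, N2.
        assert (Z.of_nat (Z.abs_nat (pos d w2 - pos d a)) = Z.abs (pos d w2 - pos d a)) by apply Zabs2Nat.id_abs.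
        lia.
      * apply (IH w2 w w2 0%nat); auto.
        -- apply sp_refl. destruct Aww as [_ [B _]]; auto.
        -- constructor.
        -- lia.
        -- intros k Wk.
           assert (Wa : walk (adjX X) a v (S m + k)).
           { change (S m + k)%nat with (S (m + k)). econstructor; eauto. eapply walk_app; eauto. }
           specialize (Hmin _ Wa). lia.
Qed.

Lemma step_axis X d v u u' n e : GX_connected X -> no_holes X -> In v X ->
  adjX X u u' -> tri_edge e u u' -> walk (adjX X) u' v n ->
  (forall k, walk (adjX X) u v k -> (S n <= k)%nat) ->
  (e = d -> Hd X d v u = Hd X d v u') /\ (e <> d -> Hd X d v u = S (Hd X d v u')).
Proof.
  intros C NH Hv A Te W Hmin. pose proof A as [Iu [Iu' _]]. split.
  - intros E; subst. apply H_sp; auto. split; auto. split; auto. exists 1%nat.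
    econstructor; [|constructor]. split; auto.
  - intros E. assert (N : ~ sp X d u u').
    { intro S. apply (sp_line X d) in S. pose proof (edge_other e d u u' Te E). lia. }
    destruct (H_adj X d v u u' C Hv A N) as [H|H]; auto.
    exfalso. apply (noup X d v C NH Hv n u' u u' 0%nat); auto.
    all: first [apply sp_refl; auto | constructor | lia | (intros k Wk; specialize (Hmin k Wk); lia)].
Qed.

Lemma sumH X v : GX_connected X -> no_holes X -> In v X ->
  forall n u, walk (adjX X) u v n -> (forall k, walk (adjX X) u v k -> (n <= k)%nat) ->
  (Hd X AxX v u + Hd X AxY v u + Hd X AxZ v u = 2 * n)%nat.
Proof.
  intros C NH Hv. induction n as [|n IH]; intros u W Hmin.
  - inversion W; subst. rewrite !H_v; auto.
  - inversion W as [|u0 u' v' n' A W' E1 E2 E3]; subst.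
    assert (Hmin' : forall k, walk (adjX X) u' v k -> (n <= k)%nat).
    { intros k Wk. assert (walk (adjX X) u v (S k)) by (econstructor; eauto). specialize (Hmin _ H). lia. }
    specialize (IH u' W' Hmin').
    pose proof A as [_ [_ [e Te]]].
    pose proof (step_axis X AxX v u u' n e C NH Hv A Te W' Hmin) as [Ax1 Ax2].
    pose proof (step_axis X AxY v u u' n e C NH Hv A Te W' Hmin) as [Ay1 Ay2].
    pose proof (step_axis X AxZ v u u' n e C NH Hv A Te W' Hmin) as [Az1 Az2].
    destruct e.
    + rewrite Ax1, Ay2, Az2 by congruence. lia.
    + rewrite Ax2, Ay1, Az2 by congruence. lia.
    + rewrite Ax2, Ay2, Az1 by congruence. lia.
Qed.

Theorem mainTheorem3 (X : list vertex) :
  GX_connected X -> no_holes X ->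
  forall u v, In u X -> In v X ->
  exists n nx ny nz : nat,
    is_dist (adjX X) u v n /\
    is_portal_dist X AxX u v nx /\
    is_portal_dist X AxY u v ny /\
    is_portal_dist X AxZ u v nz /\
    (2 * n = nx + ny + nz)%nat.
Proof.
  intros C NH u v Hu Hv.
  destruct (min_ex (fun n => walk (adjX X) u v n) (C u v Hu Hv)) as [n [W Hmin]].
  exists n, (Hd X AxX v u), (Hd X AxY v u), (Hd X AxZ v u).
  split; [split; auto|].
  split; [apply H_spec; auto|]. split; [apply H_spec; auto|]. split; [apply H_spec; auto|].
  rewrite (sumH X v C NH Hv n u W Hmin). lia.
Qed.
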